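(* Let $r,n\in\mathbb{Z}_{\geq1}$ and $j\in\mathbb{Z}_{\geq0}$. If $j\leq r$, then \[ \left|\omega_{n,r}(j)-\frac{e^{-1/n}}{j!\,n^j}\right|<\frac{1+2^{r-j}}{j!\,n^j\,(r-j)!}. \] If $j>r$, then $\omega_{n,r}(j)=0$.
   Context: $C_n\wr S_r=C_n^r\rtimes S_r$ (with $S_r$ permuting coordinates) acts on $B(n,r)=C_n\times\{1,\dots,r\}$ by $((\zeta_1,\dots,\zeta_r),\pi)\cdot(\zeta,i)=(\zeta_i\zeta,\pi(i))$. For $\sigma\in C_n\wr S_r$, $\mathrm{Fix}(\sigma)$ is its set of fixed points in $B(n,r)$ (its size is divisible by $n$). The distribution $\omega_{n,r}:\mathbb{Z}_{\geq0}\to\mathbb{R}_{\geq0}$ is $\omega_{n,r}(j)=|\{\sigma\in C_n\wr S_r: |\mathrm{Fix}(\sigma)|=jn\}|/|C_n\wr S_r|$. *)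

(* Defs.v *)
From mathcomp Require Import all_boot all_fingroup.
From Stdlib Require Import Reals.

Set Implicit Arguments.
Unset Strict Implicit.
Unset Printing Implicit Defensive.

(* The cyclic group C_n is modelled as 'I_n = {0,...,n-1} with addition mod n
   (n >= 1).  Indices {1,...,r} are modelled as 'I_r = {0,...,r-1}.
   An element of C_n wr S_r = C_n^r ⋊ S_r is a pair (zeta, pi) with
   zeta : {ffun 'I_r -> 'I_n} and pi : {perm 'I_r}. *)
Definition wreath (n r : nat) : finType := ({ffun 'I_r -> 'I_n} * {perm 'I_r})%type.

Definition Bset (n r : nat) : finType := ('I_n * 'I_r)%type.

(* The action ((zeta_1..zeta_r), pi) . (zeta, i) = (zeta_i zeta, pi(i)),
   stated pointwise as the fixed-point test: sigma . x = x. *)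
Definition acts_fixing (n r : nat) (s : wreath n r) (x : Bset n r) : bool :=
  let: (z, p) := s in
  let: (c, i) := x in
  (((val (z i) + val c) %% n)%N == val c) && (p i == i).

Definition nfix (n r : nat) (s : wreath n r) : nat :=
  #|[set x : Bset n r | acts_fixing s x]|.

Definition omega (n r j : nat) : R :=
  Rdiv (INR #|[set s : wreath n r | nfix s == (j * n)%N]|) (INR #|wreath n r|).

(* Main.v *)
Require Import Defs.
From Stdlib Require Import Reals Factorial Lra Lia.
Open Scope R_scope.

Lemma exp_alt_bound (x:R) (m:nat) : 0 <= x <= 1 ->
  Rabs (sum_f_R0 (fun i => /INR(fact i) * (-x)^i) m - exp (-x)) <= x^(S m)/INR(fact (S m)).
Proof.
  intros Hx.
  set (U := fun i => x ^ i / INR (fact i)).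
  assert (HS : forall k, sum_f_R0 (fun i => /INR(fact i) * (-x)^i) k = sum_f_R0 (tg_alt U) k).
  { intro k; apply PartSum.sum_eq; intros i _; unfold tg_alt, U.
    replace (-x) with (-1 * x) by ring. rewrite Rpow_mult_distr. unfold Rdiv. ring. }
  assert (Hdec : Un_decreasing U).
  { intro i; unfold U. simpl pow. change (fact (S i)) with (S i * fact i)%nat. rewrite mult_INR.
    assert (0 < INR (fact i)) by (apply INR_fact_lt_0).
    assert (0 <= x ^ i) by (apply pow_le; lra).

    assert (1 <= INR (S i)) by (rewrite S_INR; pose proof (pos_INR i); lra).
    unfold Rdiv. rewrite Rinv_mult.
    assert (0 < / INR (S i) <= 1).
    { split. apply Rinv_0_lt_compat; lra. rewrite <- Rinv_1. apply Rinv_le_contravar; lra. }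
    assert (0 < / INR (fact i)) by (apply Rinv_0_lt_compat; lra).
    set (a := x ^ i) in *. set (b := / INR (S i)) in *. set (c := / INR (fact i)) in *.
    assert (0 <= a * c) by (apply Rmult_le_pos; lra).
    replace (x * a * (b * c)) with ((a*c) * (x * b)) by ring.
    replace (a * c) with ((a*c) * 1) at 2 by ring.
    apply Rmult_le_compat_l; [lra|]. nra. }
  assert (Hcv0 : Un_cv U 0) by (apply cv_speed_pow_fact).
  assert (Hcv : Un_cv (fun N => sum_f_R0 (tg_alt U) N) (exp (-x))).
  { pose proof (E1_cvg (-x)) as H. unfold E1 in H.
    intros eps Heps. destruct (H eps Heps) as [N HN]. exists N. intros k Hk.
    rewrite <- HS. apply HN; auto. }
  assert (Hstep : forall k, sum_f_R0 (tg_alt U) (S k) = sum_f_R0 (tg_alt U) k + (-1)^(S k) * U (S k)).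
  { intro k. simpl. unfold tg_alt. reflexivity. }
  assert (HU : 0 <= U (S m)).
  { unfold U, Rdiv. apply Rmult_le_pos. apply pow_le; lra. left; apply Rinv_0_lt_compat, INR_fact_lt_0. }
  rewrite HS. fold (U (S m)).
  destruct (Nat.Even_or_Odd m) as [[N HN]|[N HN]].
  - destruct (alternated_series_ineq U (exp (-x)) N Hdec Hcv0 Hcv) as [H1 H2].
    rewrite <- HN in H1, H2. rewrite Hstep in H1.
    assert ((-1)^(S m) = -1).
    { rewrite HN. rewrite pow_1_odd. reflexivity. }
    rewrite H in H1. unfold Rabs; destruct Rcase_abs; lra.
  - destruct (alternated_series_ineq U (exp (-x)) N Hdec Hcv0 Hcv) as [H1 H2].
    destruct (alternated_series_ineq U (exp (-x)) (S N) Hdec Hcv0 Hcv) as [H3 H4].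
    replace (S (Nat.mul 2 N)) with m in H1 by lia.
    replace (Nat.mul 2 (S N)) with (S m) in H4 by lia.
    rewrite Hstep in H4.
    assert ((-1)^(S m) = 1).
    { replace (S m) with (2 * S N)%nat by lia. apply pow_1_even. }
    rewrite H in H4. unfold Rabs; destruct Rcase_abs; lra.
Qed.


Close Scope R_scope.
From mathcomp Require all_boot all_order all_algebra all_fingroup.
From mathcomp Require zify ring.
From mathcomp Require Rstruct.

Module Aux.
Import all_boot all_order all_algebra all_fingroup zify ring Rstruct.
Set Implicit Arguments.
Unset Strict Implicit.
Unset Printing Implicit Defensive.

Definition marked n r (s : wreath n r) : {set 'I_r} :=
  [set i | (s.2 i == i) && (val (s.1 i) == 0%N)].

Lemma modn_fix (n a c : nat) : a < n -> c < n -> ((a + c) %% n == c) = (a == 0).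
Proof.
move=> ha hc; apply/eqP/eqP => [h|->]; last by rewrite add0n modn_small.
case: (ltnP (a+c) n) => h2; first by rewrite modn_small in h; lia.
have e : (a + c) %% n = a + c - n.
  by rewrite -{1}(subnK h2) modnDr modn_small //; lia.
lia.
Qed.

Lemma nfixE n r (s : wreath n r) : nfix s = n * #|marked s|.
Proof.
rewrite /nfix.
have -> : [set x | acts_fixing s x] = setX [set: 'I_n] (marked s).
  apply/setP => -[c i]; rewrite !inE /acts_fixing; case: s => z p /=.
  by rewrite modn_fix // andbC.
by rewrite cardsX cardsT card_ord.
Qed.

Lemma card_fixK n' r (K : {set 'I_r}) :
  #|[set s : wreath n'.+1 r | K \subset marked s]| = n'.+1 ^ (r - #|K|) * (r - #|K|)`!.
Proof.
have -> : [set s : wreath n'.+1 r | K \subset marked s] =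
  setX [set z : {ffun 'I_r -> 'I_n'.+1} | z \in pffun_on ord0 (~: K) predT]
       [set p : {perm 'I_r} | perm_on (~: K) p].
  apply/setP => -[z p]; rewrite !inE /=.
  apply/subsetP/andP => [H|[/pffun_onP [H1 _] H2] i iK].
    split.
      apply/pffun_onP; split => //.
      apply/subsetP => x; rewrite !inE => zx; apply/negP => xK.
      move: (H x xK); rewrite inE => /andP[_ /eqP h]; move: zx.
      by have -> : z x = ord0 by apply/val_inj.
    apply/subsetP => x; rewrite !inE => px; apply/negP => xK.
    by move: (H x xK); rewrite inE => /andP[/eqP h _]; rewrite h eqxx in px.
  rewrite inE /=; apply/andP; split.
    apply/eqP/out_perm; first exact: H2.
    by rewrite inE iK.
  apply/eqP; have : z i == ord0.
    apply/negPn/negP => zi.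
    have : i \in ~: K by apply: (subsetP H1); rewrite inE.
    by rewrite inE iK.
  by move/eqP->.
rewrite cardsX cardsE card_pffun_on.
rewrite (@eq_card _ _ (perm_on (~: K))); last by move=> p; rewrite inE.
rewrite card_perm.
have hc : #|~: K| = r - #|K| by rewrite cardsCs setCK card_ord.
by rewrite hc card_ord.
Qed.

Lemma sum_bin n' r k :
  \sum_(s : wreath n'.+1 r) 'C(#|marked s|, k) = 'C(r, k) * (n'.+1 ^ (r - k) * (r - k)`!).
Proof.
transitivity (\sum_(s : wreath n'.+1 r) \sum_(K : {set 'I_r} | #|K| == k) ((K \subset marked s) : nat)).
  apply: eq_bigr => s _; rewrite -cards_draws -sum1_card big_mkcond /= [RHS]big_mkcond.
  apply: eq_bigr => K _; rewrite inE.
  by case: (K \subset _); case: (#|K| == k).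
rewrite exchange_big /=.
transitivity (\sum_(K : {set 'I_r} | #|K| == k) (n'.+1 ^ (r - k) * (r - k)`!)).
  apply: eq_bigr => K /eqP hK; rewrite -hK -card_fixK.
  rewrite -sum1_card [RHS]big_mkcond /=; apply: eq_bigr => s _; rewrite inE.
  by case: (K \subset _).
rewrite sum_nat_cond_const. 
by rewrite card_draws card_ord.
Qed.

Lemma binA m j i : i + j <= m -> 'C(i+j, j) * 'C(m, i+j) = 'C(m,j) * 'C(m-j, i).
Proof.
move=> h.
apply/eqP; rewrite -(eqn_pmul2r (_ : 0 < j`! * i`! * (m - j - i)`!)); last by rewrite !muln_gt0 !fact_gt0.
apply/eqP.
have e1 := bin_fact h.
have e2 := bin_fact (leq_addl i j).
have e3 : j <= m by lia.
have e4 := bin_fact e3.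
have e5 : i <= m - j by lia.
have e6 := bin_fact e5.
have E1 : i + j - j = i by lia.
have E2 : m - (i + j) = m - j - i by lia.
rewrite E1 in e2; rewrite E2 in e1.
transitivity (('C(i + j, j) * (j`! * i`!)) * ('C(m, i + j) * (m-j-i)`!)).
  by rewrite !mulnA; ring.
rewrite e2.
transitivity ('C(m, i + j) * ((i + j)`! * (m - j - i)`!)); first by ring.
rewrite e1 -e4 -e6.
ring.
Qed.

Import GRing.Theory Num.Theory.
Local Open Scope ring_scope.

Lemma alt_delta (R : comPzRingType) (m j r : nat) : (m <= r)%N ->
  \sum_(k < r.+1) (-1) ^+ (k - j) * (('C(k, j) * 'C(m, k))%:R : R) = (m == j)%:R.
Proof.
move=> hmr.
rewrite -(big_mkord xpredT (fun k => (-1) ^+ (k - j) * (('C(k, j) * 'C(m, k))%:R : R))).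
rewrite (@big_cat_nat _ _ _ m.+1) //=.
rewrite [X in _ + X]big_nat_cond [X in _ + X]big1 ?addr0; last first.
  by move=> k /andP[/andP[hk _] _]; rewrite (bin_small hk) muln0 mulr0n mulr0.
case: (ltnP m j) => hmj.
  rewrite big_nat_cond big1; last first.
    move=> k /andP[/andP[_ hk] _]; rewrite (@bin_small k j); last by lia.
    by rewrite mul0n mulr0n mulr0.
  by have -> : (m == j) = false by apply/eqP; lia.
rewrite (@big_cat_nat _ _ _ j) //=; last by lia.
rewrite big_nat_cond big1 ?add0r; last first.
  move=> k /andP[/andP[_ hk] _]; rewrite (@bin_small k j) //.
  by rewrite mul0n mulr0n mulr0.
rewrite (big_addn 0 _ j) big_mkord.
have -> : (m.+1 - j)%N = (m - j).+1 by lia.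
transitivity ('C(m, j)%:R * \sum_(i < (m - j).+1) (1 ^+ (m - j - i) * (-1) ^+ i) *+ 'C(m - j, i) : R).
  rewrite mulr_sumr; apply: eq_bigr => i _.
  rewrite addnK binA; last by move: (ltn_ord i); lia.
  by rewrite natrM expr1n mul1r mulr_natr !mulrnAr mulr1 mulr_natl.
rewrite (_ : \sum_(i < (m - j).+1) _ = (1 + -1) ^+ (m - j)); last by rewrite exprDn.
rewrite subrr expr0n.
have [->|hne] := eqVneq m j; first by rewrite subnn binn eqxx mulr1.
have -> : (m - j == 0)%N = false by apply/eqP; lia.
by rewrite mulr0.
Qed.

Lemma card_wreath n r : #|wreath n r| = (n ^ r * r`!)%N.
Proof. by rewrite /wreath card_prod card_ffun !card_ord card_Sn. Qed.

Lemma count_formula (R : comPzRingType) (n' r j : nat) :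
 (#|[set s : wreath n'.+1 r | #|marked s| == j]|%:R : R) =
  \sum_(k < r.+1) (-1)^+(k-j) * ('C(k,j) * ('C(r,k) * (n'.+1 ^ (r - k) * (r - k)`!)))%:R.
Proof.
transitivity (\sum_(s : wreath n'.+1 r) ((#|marked s| == j)%:R : R)).
  rewrite -sum1_card natr_sum big_mkcond /=; apply: eq_bigr => s _; rewrite inE.
  by case: (_ == j).
rewrite (eq_bigr (fun s => \sum_(k < r.+1) (-1)^+(k-j) * (('C(k,j) * 'C(#|marked s|,k))%:R : R))); last first.
  move=> s _; rewrite alt_delta //.
  by apply: leq_trans (max_card _) _; rewrite card_ord.
rewrite exchange_big /=; apply: eq_bigr => k _.
rewrite -sum_bin -mulr_sumr; congr (_ * _).
by rewrite big_distrr /= natr_sum.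
Qed.

Lemma term_eq (R : numFieldType) (n r j i : nat) : (0 < n)%N -> (i + j <= r)%N ->
 (('C(i+j,j) * ('C(r,i+j) * (n ^ (r-(i+j)) * (r-(i+j))`!)))%:R : R) / (n^r * r`!)%:R
 = 1 / (j`!%:R * n%:R^+j) * (1 / (i`!%:R * n%:R^+i)).
Proof.
move=> hn h.
have e1 := bin_fact h.
have e2 := bin_fact (leq_addl i j).
have E1 : (i + j - j = i)%N by lia.
rewrite E1 in e2.
have F : ('C(i+j,j) * 'C(r,i+j) * (r - (i + j))`! * (j`! * i`!) = r`!)%N.
  by rewrite -e1 -e2; ring.
have G : (n ^ (r - (i+j)) * n ^ i * n ^ j = n ^ r)%N.
  by rewrite -!expnD; f_equal; lia.
rewrite -F -G.
have nz : forall m, (m%:R : R) != 0 -> True by [].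
have hn0 : (n%:R : R) != 0 by rewrite pnatr_eq0 -lt0n.
have hf : forall m, (m`!%:R : R) != 0 by move=> m; rewrite pnatr_eq0 -lt0n fact_gt0.
have hb1 : ('C(i+j,j)%:R : R) != 0 by rewrite pnatr_eq0 -lt0n bin_gt0 leq_addl.
have hb2 : ('C(r,i+j)%:R : R) != 0 by rewrite pnatr_eq0 -lt0n bin_gt0.
have hp : forall m, ((n ^ m)%N%:R : R) != 0 by move=> m; rewrite natrX expf_neq0.
rewrite !natrM !natrX.
field.
by rewrite !expf_neq0 // !hf hb1 hb2.
Qed.

Lemma sum_formula (R : numFieldType) (n' r j : nat) : (j <= r)%N ->
 (#|[set s : wreath n'.+1 r | #|marked s| == j]|%:R : R) / (n'.+1 ^ r * r`!)%:R
 = 1/(j`!%:R * n'.+1%:R^+j) * \sum_(i < (r-j).+1) (-1)^+i * (1/(i`!%:R * n'.+1%:R^+i)).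
Proof.
move=> hj.
rewrite count_formula mulr_suml.
rewrite -(big_mkord xpredT (fun k => (-1) ^+ (k - j) *
   (('C(k, j) * ('C(r, k) * (n'.+1 ^ (r - k) * (r - k)`!)))%:R : R) / (n'.+1 ^ r * r`!)%:R)).
rewrite (@big_cat_nat _ _ _ j) //=; last by lia.
rewrite big_nat_cond big1 ?add0r; last first.
  move=> k /andP[/andP[_ hk] _]; rewrite (@bin_small k j) //.
  by rewrite mul0n mulr0n mulr0 mul0r.
rewrite (big_addn 0 _ j) big_mkord.
have -> : (r.+1 - j)%N = (r - j).+1 by lia.
rewrite mulr_sumr; apply: eq_bigr => i _.
rewrite addnK -mulrA term_eq //; last by move: (ltn_ord i); lia.
by rewrite mulrCA.
Qed.

Close Scope ring_scope.
Open Scope R_scope.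

Theorem main_aux (r n j : nat) (hr : (1 <= r)%nat) (hn : (1 <= n)%nat) :
  ((j <= r)%nat ->
    Rabs (omega n r j - exp (- / INR n) / (INR (fact j) * INR n ^ j))
      < (1 + 2 ^ (r - j)) / (INR (fact j) * INR n ^ j * INR (fact (r - j))))
  /\ ((r < j)%nat -> omega n r j = 0).
Proof.
case: n hn => [//|n'] _.
split.
- move=> hj.
  set Ssum := sum_f_R0 (fun i => / INR (fact i) * (- / INR n'.+1) ^ i) (r - j).
  have HS : Ssum = (\sum_(i < (r-j).+1) (-1)^+i * (1/(i`!%:R * n'.+1%:R^+i)))%R.
    rewrite /Ssum sum_f_R0E big_mkord; apply: eq_bigr => i _.
    by rewrite !INRE factE RpowE !RinvE !RoppE (exprNn (_^-1)) exprVn div1r invfM mulrCA.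

  have Hw : omega n'.+1 r j = Ssum / (INR (fact j) * INR n'.+1 ^ j).
    rewrite /omega.
    have -> : #|[set s : wreath n'.+1 r | nfix s == (j * n'.+1)%N]| = #|[set s : wreath n'.+1 r | #|marked s| == j]|.
      by apply: eq_card => s; rewrite !inE nfixE mulnC eqn_pmul2r.
    rewrite card_wreath !INRE RdivE (@sum_formula _ n' _ _ hj) HS factE RpowE RdivE !RmultE.
    by rewrite div1r mulrC.
  rewrite Hw.
  have hn1 : 1 <= INR n'.+1 by rewrite S_INR; pose proof (pos_INR n'); lra.
  have hx : 0 <= / INR n'.+1 <= 1.
    split; [left; apply Rinv_0_lt_compat; lra|].
    rewrite <- Rinv_1; apply Rinv_le_contravar; lra.
  have B := @exp_alt_bound (/ INR n'.+1) (r - j) hx.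
  set x := / INR n'.+1 in hx B *.
  set m := (r - j)%N in B *.
  set e := exp (- x) in B *.
  have hD : 0 < INR (fact j) * INR n'.+1 ^ j.
    apply Rmult_lt_0_compat; [apply INR_fact_lt_0| apply pow_lt; lra].
  set D := INR (fact j) * INR n'.+1 ^ j in hD *.
  have hfm : 0 < INR (fact m) by apply INR_fact_lt_0.
  have hfm1 : INR (fact m) <= INR (fact (Datatypes.S m)).
    rewrite fact_simpl mult_INR S_INR; pose proof (pos_INR m); nra.
  have hxm : x ^ (Datatypes.S m) <= 1.
    rewrite <- (pow1 (Datatypes.S m)); apply pow_incr; lra.
  have hfm1p : 0 < INR (fact (Datatypes.S m)) by apply INR_fact_lt_0.
  have B2 : x ^ (Datatypes.S m) / INR (fact (Datatypes.S m)) <= / INR (fact m).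
    unfold Rdiv; apply Rle_trans with (1 * / INR (fact (Datatypes.S m))).
    + apply Rmult_le_compat_r; [left; apply Rinv_0_lt_compat; lra| lra].
    + rewrite Rmult_1_l; apply Rinv_le_contravar; lra.
  have h2 : 0 < 2 ^ m by apply pow_lt; lra.
  have E : Ssum / D - e / D = (Ssum - e) * / D.
    by rewrite /Rdiv Rmult_minus_distr_r.
  rewrite E Rabs_mult (Rabs_right (/ D)); last by left; apply Rinv_0_lt_compat.
  have E2 : (1 + 2 ^ m) / (D * INR (fact m)) = ((1 + 2^m) * / INR (fact m)) * / D.
    by rewrite /Rdiv Rinv_mult Rmult_assoc (Rmult_comm (/ D)).
  rewrite E2; apply Rmult_lt_compat_r; [apply Rinv_0_lt_compat; lra|].
  have hi := Rinv_0_lt_compat _ hfm.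
  have : / INR (fact m) < (1 + 2^m) * / INR (fact m) by nra.
  change (sum_f_R0 _ m) with Ssum in B. move=> ?; lra.
- move=> hrj; rewrite /omega.
  have -> : [set s : wreath n'.+1 r | nfix s == (j * n'.+1)%N] = set0.
    apply/setP => s; rewrite !inE nfixE mulnC eqn_pmul2r //.
    apply/negbTE; rewrite neq_ltn; apply/orP; left.
    by apply: leq_ltn_trans hrj; apply: leq_trans (max_card _) _; rewrite card_ord.
  rewrite cards0 /Rdiv /=; apply Rmult_0_l.
Qed.

End Aux.

Unset Implicit Arguments.
Open Scope R_scope.

Theorem mainTheorem4 (r n j : nat) (hr : (1 <= r)%nat) (hn : (1 <= n)%nat) :
  ((j <= r)%nat ->
    Rabs (omega n r j - exp (- / INR n) / (INR (fact j) * INR n ^ j))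
      < (1 + 2 ^ (r - j)) / (INR (fact j) * INR n ^ j * INR (fact (r - j))))
  /\ ((r < j)%nat -> omega n r j = 0).
Proof.
  pose proof (@Aux.main_aux r n j (ssrbool.introT ssrnat.leP hr) (ssrbool.introT ssrnat.leP hn)) as H.
  change (ssrnat.subn r j) with (Nat.sub r j) in H.
  destruct H as [H1 H2].
  split.
  - intro h. exact (H1 (ssrbool.introT ssrnat.leP h)).
  - intro h. exact (H2 (ssrbool.introT ssrnat.leP h)).
Qed.
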